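(* Let $N\ge 0$ be an integer, let $T^{(1)}=\{t^{(1)}_{n',n}\}_{0\le n',n\le N}$ and $T^{(2)}=\{t^{(2)}_{n',n}\}_{0\le n',n\le N}$ be real $(N+1)\times(N+1)$ matrices, and let $\{f'_{n_1,n_2}\}$ be real numbers indexed by the sparse index set $\{(n_1,n_2)\in\mathbb{N}_0^2: n_1+n_2\le N\}$. Define, for $n_1+n_2\le N$, $$f_{n_1,n_2}=\sum_{\substack{n_1',n_2'\ge 0\\ n_1'+n_2'\le N}} f'_{n_1',n_2'}\, t^{(1)}_{n_1',n_1}\, t^{(2)}_{n_2',n_2}.$$ 1. Define the ''first $x_1$, then $x_2$'' computation: for $n_1+n_2'\le N$, $g_{n_1,n_2'}=\sum_{0\le n_1'\le N-n_2'} f'_{n_1',n_2'}\,t^{(1)}_{n_1',n_1}$, and for $n_1+n_2\le N$, $\tilde f_{n_1,n_2}=\sum_{0\le n_2'\le N-n_1} g_{n_1,n_2'}\,t^{(2)}_{n_2',n_2}$. Suppose at least one of the following holds: (a) $T^{(1)}$ is lower triangular, i.e. $t^{(1)}_{n_1',n_1}=0$ whenever $n_1'<n_1$; (b) $T^{(2)}$ is upper triangular, i.e. $t^{(2)}_{n_2',n_2}=0$ whenever $n_2'>n_2$. Then $\tilde f_{n_1,n_2}=f_{n_1,n_2}$ for all $(n_1,n_2)$ with $n_1+n_2\le N$. 2. Define the ''first $x_2$, then $x_1$'' computation: for $n_1'+n_2\le N$, $h_{n_1',n_2}=\sum_{0\le n_2'\le N-n_1'} f'_{n_1',n_2'}\,t^{(2)}_{n_2',n_2}$,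 and for $n_1+n_2\le N$, $\hat f_{n_1,n_2}=\sum_{0\le n_1'\le N-n_2} h_{n_1',n_2}\,t^{(1)}_{n_1',n_1}$. Suppose at least one of the following holds: (a) $T^{(1)}$ is upper triangular, i.e. $t^{(1)}_{n_1',n_1}=0$ whenever $n_1'>n_1$; (b) $T^{(2)}$ is lower triangular, i.e. $t^{(2)}_{n_2',n_2}=0$ whenever $n_2'<n_2$. Then $\hat f_{n_1,n_2}=f_{n_1,n_2}$ for all $(n_1,n_2)$ with $n_1+n_2\le N$.
   Context: $\mathbb{N}_0$ denotes the nonnegative integers. All quantities $f'$, $g$, $h$, $f$, $\tilde f$, $\hat f$ are only defined on index pairs whose sum is at most $N$ (a sparse, triangular index set), which is why the ranges of summation in the dimension-by-dimension computations are truncated as written. *)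

(* Defs.v *)
From HB Require Import structures.
From mathcomp Require Import all_boot all_order all_algebra.
Set Implicit Arguments. Unset Strict Implicit. Unset Printing Implicit Defensive.
Import Order.TTheory GRing.Theory Num.Theory.
Local Open Scope ring_scope.

Definition ent (R : ringType) (N : nat) (T : 'M[R]_(N.+1)) (i j : nat) : R :=
  T (inord i) (inord j).

Definition lower_tri (R : ringType) (N : nat) (T : 'M[R]_(N.+1)) : Prop :=
  forall i j : 'I_N.+1, (i < j)%N -> T i j = 0.
Definition upper_tri (R : ringType) (N : nat) (T : 'M[R]_(N.+1)) : Prop :=
  forall i j : 'I_N.+1, (j < i)%N -> T i j = 0.

Definition ffull (R : ringType) (N : nat) (T1 T2 : 'M[R]_(N.+1))
  (fp : nat -> nat -> R) (n1 n2 : nat) : R :=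
  \sum_(0 <= a < N.+1) \sum_(0 <= b < (N - a).+1)
     fp a b * ent T1 a n1 * ent T2 b n2.

Definition gx1 (R : ringType) (N : nat) (T1 : 'M[R]_(N.+1))
  (fp : nat -> nat -> R) (n1 b : nat) : R :=
  \sum_(0 <= a < (N - b).+1) fp a b * ent T1 a n1.

Definition ftilde (R : ringType) (N : nat) (T1 T2 : 'M[R]_(N.+1))
  (fp : nat -> nat -> R) (n1 n2 : nat) : R :=
  \sum_(0 <= b < (N - n1).+1) gx1 T1 fp n1 b * ent T2 b n2.

Definition hx2 (R : ringType) (N : nat) (T2 : 'M[R]_(N.+1))
  (fp : nat -> nat -> R) (a n2 : nat) : R :=
  \sum_(0 <= b < (N - a).+1) fp a b * ent T2 b n2.

Definition fhat (R : ringType) (N : nat) (T1 T2 : 'M[R]_(N.+1))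
  (fp : nat -> nat -> R) (n1 n2 : nat) : R :=
  \sum_(0 <= a < (N - n2).+1) hx2 T2 fp a n2 * ent T1 a n1.

(* Main.v *)
Require Import Defs.
From HB Require Import structures.
From mathcomp Require Import all_boot all_order all_algebra.
From mathcomp Require Import zify.
Import Order.TTheory GRing.Theory Num.Theory.
Local Open Scope ring_scope.

Lemma widenN (R : realFieldType) (N k : nat) (G : nat -> R) : (k <= N)%N ->
  \sum_(0 <= i < k.+1) G i = \sum_(0 <= i < N.+1) (if (i <= k)%N then G i else 0).
Proof.
move=> hk; rewrite (big_nat_widen _ _ N.+1) // big_mkcond /=.
by apply: eq_bigr => i _; rewrite ltnS.
Qed.

Lemma ent_low (R : realFieldType) (N : nat) (T : 'M[R]_(N.+1)) (i j : nat) :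
  lower_tri T -> (i <= N)%N -> (j <= N)%N -> (i < j)%N -> ent T i j = 0.
Proof.
move=> H hi hj hij; rewrite /ent; apply: H.
rewrite !inordK //; lia.
Qed.

Lemma ent_up (R : realFieldType) (N : nat) (T : 'M[R]_(N.+1)) (i j : nat) :
  upper_tri T -> (i <= N)%N -> (j <= N)%N -> (j < i)%N -> ent T i j = 0.
Proof.
move=> H hi hj hij; rewrite /ent; apply: H.
rewrite !inordK //; lia.
Qed.

Theorem proposition3p1 (R : realFieldType) (N : nat) (T1 T2 : 'M[R]_(N.+1))
  (fp : nat -> nat -> R) :
  ((lower_tri T1 \/ upper_tri T2) ->
     forall n1 n2 : nat, (n1 + n2 <= N)%N -> ftilde T1 T2 fp n1 n2 = ffull T1 T2 fp n1 n2)
  /\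
  ((upper_tri T1 \/ lower_tri T2) ->
     forall n1 n2 : nat, (n1 + n2 <= N)%N -> fhat T1 T2 fp n1 n2 = ffull T1 T2 fp n1 n2).
Proof.
split=> H n1 n2 hn.
- rewrite /ftilde /ffull.
  under eq_bigr => b _ do rewrite /gx1 big_distrl /=.
  rewrite (@widenN _ N); last lia.
  under [in RHS]eq_bigr => a _ do rewrite (@widenN _ N _ _ (leq_subr _ _)).
  rewrite [in RHS]exchange_big /=.
  apply: eq_big_nat => b /andP[_ hb].
  rewrite (@widenN _ N); last lia.
  case: ifP => hb1.
  + apply: eq_big_nat => a /andP[_ ha].
    have -> : (b <= N - a)%N = (a <= N - b)%N by apply/idP/idP; lia.
    by [].
  + rewrite big1 //= => a _.
    case: ifP => // hab.
    case: H => H.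
    * rewrite (@ent_low _ _ _ a n1 H); [by rewrite mulr0 mul0r|lia|lia|lia].
    * rewrite (@ent_up _ _ _ b n2 H); [by rewrite mulr0|lia|lia|lia].
- rewrite /fhat /ffull.
  under eq_bigr => a _ do rewrite /hx2 big_distrl /=.
  rewrite (@widenN _ N); last lia.
  under [in RHS]eq_bigr => a _ do rewrite (@widenN _ N _ _ (leq_subr _ _)).
  apply: eq_big_nat => a /andP[_ ha].
  case: ifP => ha1.
  + rewrite (@widenN _ N _ _ (leq_subr _ _)).
    apply: eq_big_nat => b /andP[_ hb].
    case: ifP => //.
    by rewrite mulrAC.
  + rewrite big1 //= => b _.
    case: ifP => // hab.
    case: H => H.
    * rewrite (@ent_up _ _ _ a n1 H); [by rewrite mulr0 mul0r|lia|lia|lia].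
    * rewrite (@ent_low _ _ _ b n2 H); [by rewrite mulr0|lia|lia|lia].
Qed.
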